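(* Let $(t_j^i)_{0\le j\le i}$ be real numbers and let $h_{j,k}^i$ ($0\le k\le i$, $0\le j\le i-k$) be defined by $h_{j,0}^i=t_j^i$ and $h_{j,k}^i=h_{j,k-1}^{i-1}+h_{j,k-1}^{i}+h_{j+1,k-1}^{i}$ for $k\ge 1$. Define the tetrahedron coefficient transform $b_n=\sum_{i=0}^{n}\sum_{j=0}^{i}\binom{n}{j,\,n-i,\,i-j}t_j^i$. Then $h_{0,n}^n=b_n$ for every $n\ge 0$.
   Context: For non-negative integers $p,q,r$ with $p+q+r=n$, $\binom{n}{p,q,r}=\frac{n!}{p!\,q!\,r!}$ denotes the tetrahedron trinomial coefficient. *)

(* Defs.v *)
From HB Require Import structures.
From mathcomp Require Import all_boot all_order all_algebra.
From mathcomp Require Import reals.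
Set Implicit Arguments. Unset Strict Implicit. Unset Printing Implicit Defensive.
Import Order.TTheory GRing.Theory Num.Theory.
Local Open Scope ring_scope.

Definition trinom (n p q r : nat) : nat := (n`! %/ (p`! * q`! * r`!))%N.

(* t i j stands for t_j^i ;  hh t k i j stands for h_{j,k}^i *)
Fixpoint hh (R : realType) (t : nat -> nat -> R) (k i j : nat) : R :=
  match k with
  | 0 => t i j
  | k'.+1 => hh t k' i.-1 j + hh t k' i j + hh t k' i j.+1
  end.

Definition bcoef (R : realType) (t : nat -> nat -> R) (n : nat) : R :=
  \sum_(0 <= i < n.+1) \sum_(0 <= j < i.+1) (trinom n j (n - i) (i - j))%:R * t i j.

(* Main.v *)
Require Import Defs.
From HB Require Import structures.
From mathcomp Require Import all_boot all_order all_algebra.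
From mathcomp Require Import reals.
Local Open Scope ring_scope.
Import GRing.Theory.

Definition G (k a c : nat) : nat := ('C(k,a) * 'C(k-a,c))%N.

Lemma G_rec k a c : G k.+1 a c = ((if a is a'.+1 then G k a' c else 0) + G k a c
   + (if c is c'.+1 then G k a c' else 0))%N.
Proof.
rewrite /G; case: a => [|a]; case: c => [|c];
  rewrite ?bin0 ?subn0 ?binS ?muln1 ?mul1n ?addn0 ?add0n ?subSS //.
try by rewrite addnC.
rewrite (addnC 'C(k,a.+1)) mulnDl -addnA; congr addn.
have [le|lt] := leqP k a.
  by rewrite (bin_small (n:=k) (m:=a.+1)) ?ltnS // !mul0n.
by rewrite -(subnSK lt) binS mulnDr.
Qed.

Lemma G_small1 k a c : (k < a)%N -> G k a c = 0%N.
Proof. by move=> h; rewrite /G bin_small // mul0n. Qed.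

Lemma G_small2 k a c : (k < c)%N -> G k a c = 0%N.
Proof. move=> h; rewrite /G (bin_small (n:=k-a)) ?muln0 //.
exact: leq_ltn_trans (leq_subr a k) h. Qed.

Definition S (R : realType) (t : nat -> nat -> R) k i j N : R :=
  \sum_(0<=a<N) \sum_(0<=c<N) (G k a c)%:R * t (i-a)%N (j+c)%N.

Arguments S {R}.

Lemma hh_formula (R : realType) (t : nat -> nat -> R) k :
  forall i j N, (k < N)%N -> hh t k i j = S t k i j N.
Proof.
elim: k => [|k IH] i j [//|M] hkM.
  rewrite /S big_nat_recl // big_nat_recl //.
  rewrite [X in _ + X + _]big1; last by move=> c _; rewrite G_small2 // mul0r.
  rewrite [X in _ + X]big1; last first.
    by move=> a _; apply: big1 => c _; rewrite G_small1 // mul0r.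
  by rewrite /G /= mul1r subn0 addn0 !addr0.
have hk : (k < M)%N by [].
have hk1 : (k < M.+1)%N by apply: ltnW.
rewrite /= (IH i.-1 j M.+1) // (IH i j M.+1) // (IH i j.+1 M.+1) // /S.
rewrite [RHS](eq_bigr (fun a =>
   \sum_(0<=c<M.+1) ((if a is a'.+1 then G k a' c else 0)%:R * t (i-a)%N (j+c)%N)
 + \sum_(0<=c<M.+1) ((G k a c)%:R * t (i-a)%N (j+c)%N)
 + \sum_(0<=c<M.+1) ((if c is c'.+1 then G k a c' else 0)%:R * t (i-a)%N (j+c)%N))); last first.
  by move=> a _; rewrite -!big_split; apply: eq_bigr => c _; rewrite G_rec !natrD !mulrDl.
rewrite !big_split /=.
congr (_ + _ + _).
- rewrite [RHS]big_nat_recl // [in RHS]big1 ?add0r; last by move=> c _; rewrite mul0r.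
  rewrite big_nat_recr //= [X in _ + X]big1 ?addr0; last first.
    by move=> c _; rewrite G_small1 // mul0r.
  apply: eq_bigr => a _; apply: eq_bigr => c _.
  by rewrite -subn1 -subnDA add1n.
- apply: eq_bigr => a _.
  rewrite [RHS]big_nat_recl // /= mul0r add0r.
  rewrite big_nat_recr //= G_small2 // mul0r addr0.
  by apply: eq_bigr => c _; rewrite addSnnS.
Qed.

From mathcomp Require Import ring.

Lemma trinom_G n a j : (a <= n)%N -> (j <= n - a)%N -> trinom n j a (n-a-j) = G n a j.
Proof.
move=> ha hj; rewrite /trinom /G -(bin_fact ha) -(bin_fact hj).
have -> : ('C(n, a) * (a`! * ('C(n - a, j) * (j`! * (n - a - j)`!))))%N
   = ('C(n, a) * 'C(n - a, j) * (j`! * a`! * (n - a - j)`!))%N by ring.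
by rewrite mulnK // !muln_gt0 !fact_gt0.
Qed.

Theorem theorem2 (R : realType) (t : nat -> nat -> R) (n : nat) :
  hh t n n 0 = bcoef t n.
Proof.
rewrite (@hh_formula R t n n 0 n.+1 (ltnSn n)) /S /bcoef big_nat_rev.
apply: eq_big_nat => a /andP[_ ha]; rewrite ltnS in ha.
rewrite add0n subSS subKn //.
rewrite (big_cat_nat (n := a.+1)) //=.
rewrite [X in _ + X]big1_seq ?addr0; last first.
  move=> c /andP[_]; rewrite mem_index_iota => /andP[hc _].
  by rewrite /G subKn // (bin_small hc) muln0 mul0r.
apply: eq_big_nat => c /andP[_ hc]; rewrite ltnS in hc.
have := @trinom_G n (n - a) c (leq_subr a n); rewrite subKn // => ->//.
Qed.
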